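(* Let $G$ be a finite simple connected graph and let $C$ be a circuit of the toric ideal $I_G$ (i.e. $C\in\mathcal{C}_{A_G}$). Then $\operatorname{index}(C)=1$; consequently the true degree of $C$ equals its degree: $\operatorname{true\,deg}(C)=\deg(C)$.
   Context: Let $G$ be a finite simple connected graph with vertices $v_1,\dots,v_n$ and edges $e_1,\dots,e_m$. To each edge $e=\{v_i,v_j\}$ associate $a_e=\mathbf{v}_i+\mathbf{v}_j\in\mathbb{Z}^n$, where $\mathbf{v}_k$ denotes the $k$-th standard basis vector. Let $A_G=\{a_e : e\in E(G)\}$. For a finite set $A=\{\mathbf a_1,\dots,\mathbf a_m\}\subseteq\mathbb{N}^n$, the toric ideal $I_A\subseteq\mathbb{K}[x_1,\dots,x_m]$ ($\mathbb{K}$ a field) is the ideal generated by all binomials $\mathbf{x}^{\mathbf u}-\mathbf{x}^{\mathbf v}$ with $\mathbf u,\mathbf v\in\mathbb{N}^m$ and $\sum u_i\mathbf a_i=\sum v_i\mathbf a_i$; $I_G:=I_{A_G}$ in the polynomial ring $\mathbb{K}[e_1,\dots,e_m]$. A circuit of $I_A$ is an irreducible binomial $\mathbf{x}^{\mathbf u}-\mathbf{x}^{\mathbf v}\in I_A$ whose support (set of variables appearing) is minimal with respect to inclusion among nonzero binomials of $I_A$; $\mathcal{C}_A$ denotes the set of circuits. The support $\operatorname{supp}(C)$ of a circuit is regarded as the subset $\{\mathbf a_i : x_i \text{ appears in } C\}\subseteq A$. The index of $C$ is the (finite) index $\operatorname{index}(C)=[\,\mathbb{R}\operatorname{supp}(C)\cap\mathbb{Z}A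 : \mathbb{Z}\operatorname{supp}(C)\,]$, where $\mathbb{Z}A$ is the lattice generated by $A$. The degree of a binomial $\mathbf{x}^{\mathbf u}-\mathbf{x}^{\mathbf v}$ is the usual total degree (for $I_G$ all such binomials are homogeneous, so $\deg \mathbf{x}^{\mathbf u}=\deg\mathbf{x}^{\mathbf v}$). The true degree of a circuit $C$ is $\operatorname{true\,deg}(C)=\deg(C)\cdot\operatorname{index}(C)$. *)

(* Defs.v *)
From HB Require Import structures.
From mathcomp Require Import all_boot all_order all_algebra.
Set Implicit Arguments. Unset Strict Implicit. Unset Printing Implicit Defensive.
Import Order.TTheory GRing.Theory Num.Theory.
Local Open Scope ring_scope.

(* A graph with vertices 'I_n and edges 'I_m; edge e has endpoints ends e. *)
Definition graph_ends (n m : nat) := 'I_m -> 'I_n * 'I_n.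

Definition simple_graph n m (ends : graph_ends n m) : Prop :=
  (forall e, (ends e).1 != (ends e).2) /\
  (forall e f, [set (ends e).1; (ends e).2] = [set (ends f).1; (ends f).2] -> e = f).

Definition adj n m (ends : graph_ends n m) : rel 'I_n :=
  fun x y => [exists e : 'I_m,
    (((ends e).1 == x) && ((ends e).2 == y)) || (((ends e).1 == y) && ((ends e).2 == x))].

Definition connected_graph n m (ends : graph_ends n m) : Prop :=
  forall x y : 'I_n, connect (adj ends) x y.

Definition avec n m (ends : graph_ends n m) (e : 'I_m) (k : 'I_n) : int :=
  ((k == (ends e).1)%:R + (k == (ends e).2)%:R).

(* Binomials x^u - x^v of K[e_1..e_m] are encoded by their exponent vectors (u, v). *)
Definition in_toric n m (ends : graph_ends n m) (u v : {ffun 'I_m -> nat}) : Prop :=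
  forall k : 'I_n, \sum_(e < m) (u e)%:R * avec ends e k = \sum_(e < m) (v e)%:R * avec ends e k.

Definition nonzero_binom m (u v : {ffun 'I_m -> nat}) : Prop := u != v.

Definition bsupp m (u v : {ffun 'I_m -> nat}) : {set 'I_m} :=
  [set e | (u e != 0%N) || (v e != 0%N)].

Definition bgcd m (u v : {ffun 'I_m -> nat}) : nat :=
  \big[gcdn/0%N]_(e < m) gcdn (u e) (v e).

Definition irreducible_binom m (u v : {ffun 'I_m -> nat}) : Prop :=
  nonzero_binom u v /\ (forall e, (u e == 0%N) || (v e == 0%N)) /\ bgcd u v = 1%N.

Definition is_circuit n m (ends : graph_ends n m) (u v : {ffun 'I_m -> nat}) : Prop :=
  irreducible_binom u v /\ in_toric ends u v /\
  (forall u' v' : {ffun 'I_m -> nat}, nonzero_binom u' v' -> in_toric ends u' v' ->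
     bsupp u' v' \subset bsupp u v -> bsupp u' v' = bsupp u v).

Definition bdeg m (u v : {ffun 'I_m -> nat}) : nat :=
  maxn (\sum_(e < m) u e) (\sum_(e < m) v e).

Definition in_ZA n m (ends : graph_ends n m) (x : 'I_n -> int) : Prop :=
  exists c : 'I_m -> int, forall k, x k = \sum_(e < m) c e * avec ends e k.

Definition in_Zspan n m (ends : graph_ends n m) (S : {set 'I_m}) (x : 'I_n -> int) : Prop :=
  exists c : 'I_m -> int, (forall e, e \notin S -> c e = 0) /\
    forall k, x k = \sum_(e < m) c e * avec ends e k.

Definition in_Rspan (R : realFieldType) n m (ends : graph_ends n m) (S : {set 'I_m})
    (x : 'I_n -> int) : Prop :=
  exists c : 'I_m -> R, (forall e, e \notin S -> c e = 0) /\
    forall k, (x k)%:~R = \sum_(e < m) c e * (avec ends e k)%:~R.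

(* index [R S ∩ ZA : Z S] = k : there are exactly k cosets *)
Definition lattice_index_is (R : realFieldType) n m (ends : graph_ends n m)
    (S : {set 'I_m}) (k : nat) : Prop :=
  let L1 := fun x => in_ZA ends x /\ in_Rspan R ends S x in
  exists y : 'I_k -> ('I_n -> int),
    (forall i, L1 (y i)) /\
    (forall i j, i <> j -> ~ in_Zspan ends S (fun t => y i t - y j t)) /\
    (forall x, L1 x -> exists i, in_Zspan ends S (fun t => x t - y i t)).

Definition circuit_index_is (R : realFieldType) n m (ends : graph_ends n m)
    (u v : {ffun 'I_m -> nat}) (k : nat) : Prop :=
  lattice_index_is R ends (bsupp u v) k.

Definition true_deg_is (R : realFieldType) n m (ends : graph_ends n m)
    (u v : {ffun 'I_m -> nat}) (d : nat) : Prop :=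
  exists k, circuit_index_is R ends u v k /\ d = (bdeg u v * k)%N.

(* Main.v *)
Require Import Defs.
From HB Require Import structures.
From mathcomp Require Import all_boot all_order all_algebra.
From mathcomp Require Import ring.
From Stdlib Require Import ClassicalEpsilon.
Set Implicit Arguments. Unset Strict Implicit. Unset Printing Implicit Defensive.
Import Order.TTheory GRing.Theory Num.Theory.
Local Open Scope ring_scope.

Definition pb (P : Prop) : bool := if excluded_middle_informative P then true else false.
Lemma pbP (P : Prop) : reflect P (pb P).
Proof. rewrite /pb; case: excluded_middle_informative => h; by constructor. Qed.

Definition dlt (n : nat) (a : 'I_n) : 'I_n -> int := fun k => ((k == a)%:R : int).

Lemma Zs_ext n m (ends : graph_ends n m) S (x y : 'I_n -> int) :
  (forall k, x k = y k) -> in_Zspan ends S x -> in_Zspan ends S y.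
Proof. move=> h [c [hc hx]]; exists c; split=> // k; rewrite -h; exact: hx. Qed.

Lemma Zs0 n m (ends : graph_ends n m) S : in_Zspan ends S (fun _ : 'I_n => 0).
Proof. exists (fun _ => 0); split=> [e _ //|k]; rewrite big1 // => e _; by rewrite mul0r. Qed.

Lemma ZsD n m (ends : graph_ends n m) S x y :
  in_Zspan ends S x -> in_Zspan ends S y -> in_Zspan ends S (fun k => x k + y k).
Proof.
move=> [c [hc hx]] [d [hd hy]]; exists (fun e => c e + d e); split.
  by move=> e he; rewrite hc ?hd ?addr0.
move=> k; rewrite hx hy -big_split /=; apply: eq_bigr => e _; by rewrite mulrDl.
Qed.

Lemma ZsZ n m (ends : graph_ends n m) S z x :
  in_Zspan ends S x -> in_Zspan ends S (fun k => z * x k).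
Proof.
move=> [c [hc hx]]; exists (fun e => z * c e); split.
  by move=> e he; rewrite hc ?mulr0.
move=> k; rewrite hx big_distrr /=; apply: eq_bigr => e _; by rewrite mulrA.
Qed.

Lemma ZsB n m (ends : graph_ends n m) S x y :
  in_Zspan ends S x -> in_Zspan ends S y -> in_Zspan ends S (fun k => x k - y k).
Proof. move=> hx hy; apply: Zs_ext (ZsD hx (ZsZ (-1) hy)) => k; by rewrite mulN1r. Qed.

Lemma Zs_sum n m (ends : graph_ends n m) S (I : finType) (F : I -> 'I_n -> int) :
  (forall i, in_Zspan ends S (F i)) -> in_Zspan ends S (fun t => \sum_i F i t).
Proof.
move=> h.
have: forall s, in_Zspan ends S (fun t => \sum_(i <- s) F i t).
  elim=> [|a s IH].
    by apply: Zs_ext (Zs0 _ _) => k; rewrite big_nil.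
  by apply: Zs_ext (ZsD (h a) IH) => k; rewrite big_cons.
by move/(_ (index_enum I)).
Qed.

Lemma Zs_edge n m (ends : graph_ends n m) (S : {set 'I_m}) e :
  e \in S -> in_Zspan ends S (avec ends e).
Proof.
move=> he; exists (fun f => ((f == e)%:R : int)); split.
  by move=> f hf; case: eqP hf => // ->; rewrite he.
move=> k; rewrite (bigD1 e) //= eqxx mul1r big1 ?addr0 // => f /negbTE ->; by rewrite mul0r.
Qed.

Lemma decomp_delta n (x : 'I_n -> int) t : x t = \sum_k x k * dlt k t.
Proof.
rewrite (bigD1 t) //= /dlt eqxx mulr1 big1 ?addr0 // => k hk.
by rewrite eq_sym (negbTE hk) mulr0.
Qed.

Lemma Zs_decomp n m (ends : graph_ends n m) S (x : 'I_n -> int) (r : 'I_n) (s : 'I_n -> int) :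
  (forall k, x k != 0 -> in_Zspan ends S (fun t => dlt k t - s k * dlt r t)) ->
  in_Zspan ends S (fun t => (\sum_k s k * x k) * dlt r t) ->
  in_Zspan ends S x.
Proof.
move=> h1 h2.
have h3 : in_Zspan ends S (fun t => \sum_k x k * (dlt k t - s k * dlt r t)).
  apply: Zs_sum => k; case: (eqVneq (x k) 0) => hk.
    by apply: Zs_ext (Zs0 _ _) => t; rewrite hk mul0r.
  exact: ZsZ (h1 k hk).
apply: Zs_ext (ZsD h3 h2) => t.
symmetry; rewrite (decomp_delta x t) mulr_suml -big_split /=; apply: eq_bigr => k _.
ring.
Qed.

Lemma sum_sdelta n (s : 'I_n -> int) a : \sum_k s k * (k == a)%:R = s a.
Proof.
rewrite (bigD1 a) //= eqxx mulr1 big1 ?addr0 // => k /negbTE ->; by rewrite mulr0.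
Qed.

Lemma sum_avec n m (ends : graph_ends n m) (s : 'I_n -> int) e :
  \sum_k s k * avec ends e k = s (ends e).1 + s (ends e).2.
Proof.
rewrite /avec; under eq_bigr do rewrite mulrDr.
by rewrite big_split /= !sum_sdelta.
Qed.

Lemma Rspan_supp (R : realFieldType) n m (ends : graph_ends n m) (S : {set 'I_m}) x k :
  in_Rspan R ends S x -> (forall e, e \in S -> avec ends e k = 0) -> x k = 0.
Proof.
move=> [c [hc hx]] h; apply/eqP; rewrite -(intr_eq0 R) hx big1 // => e _.
case: (boolP (e \in S)) => he; first by rewrite h ?mulr0.
by rewrite hc ?mul0r.
Qed.

Lemma ZA_even n m (ends : graph_ends n m) x :
  in_ZA ends x -> exists D : int, \sum_k x k = 2 * D.
Proof.
move=> [d hd]; exists (\sum_e d e).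
rewrite (eq_bigr _ (fun k _ => hd k)) exchange_big /= mulr_sumr; apply: eq_bigr => e _.
rewrite -mulr_sumr (eq_bigr (fun k => 1 * avec ends e k)); last by move=> k _; rewrite mul1r.
rewrite sum_avec /=; ring.
Qed.

Lemma Rspan_phi (R : realFieldType) n m (ends : graph_ends n m) (S : {set 'I_m}) x (s : 'I_n -> int) :
  in_Rspan R ends S x -> (forall e, e \in S -> s (ends e).1 + s (ends e).2 = 0) ->
  \sum_k s k * x k = 0.
Proof.
move=> [c [hc hx]] hs; apply/eqP; rewrite -(intr_eq0 R) rmorph_sum /=.
under eq_bigr do rewrite rmorphM /= hx mulr_sumr.
rewrite exchange_big /= big1 // => e _.
have -> : \sum_k (s k)%:~R * (c e * (avec ends e k)%:~R) =
          c e * ((\sum_k s k * avec ends e k)%:~R : R).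
  rewrite rmorph_sum mulr_sumr; apply: eq_bigr => k _; rewrite rmorphM /=; ring.
case: (boolP (e \in S)) => he; first by rewrite sum_avec hs // mulr0z mulr0.
by rewrite hc ?mul0r.
Qed.

Lemma circ_conn n m (ends : graph_ends n m) u v (HC : is_circuit ends u v)
  (X : 'I_n -> bool) :
  (forall e, e \in bsupp u v -> X (ends e).1 = X (ends e).2) ->
  (exists2 e, e \in bsupp u v & X (ends e).1) ->
  forall e, e \in bsupp u v -> X (ends e).1.
Proof.
move=> hcl [e0 he0 hX0] e he.
have [[Huv [Hdisj Hg]] [Htor Hmin]] := HC.
pose u' := [ffun f => if X (ends f).1 then u f else 0%N].
pose v' := [ffun f => if X (ends f).1 then v f else 0%N].
have HSuv : forall f, f \in bsupp u v -> u f != v f.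
  move=> f; rewrite inE; case/orP: (Hdisj f) => /eqP ->.
    by rewrite eqxx /= eq_sym.
  by rewrite eqxx orbF.
have pw : forall (w : {ffun 'I_m -> nat}) k f,
    (forall f, f \notin bsupp u v -> w f = 0%N) ->
    ((if X (ends f).1 then w f else 0%N)%:R * avec ends f k : int) =
    if X k then (w f)%:R * avec ends f k else 0.
  move=> w k f hw; case: (boolP (f \in bsupp u v)) => hf; last first.
    by rewrite hw //; case: ifP; case: ifP => _ _; rewrite mul0r.
  have h12 := hcl f hf.
  case hx1: (X (ends f).1); rewrite hx1 in h12.
    case hk: (X k) => //.
    have e1 : (k == (ends f).1) = false by apply/eqP => ek; move: hx1; rewrite -ek hk.
    have e2 : (k == (ends f).2) = false by apply/eqP => ek; move: h12; rewrite -ek hk.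
    by rewrite /avec e1 e2 /= addr0 mulr0.
  case hk: (X k); last by rewrite mul0r.
  have e1 : (k == (ends f).1) = false by apply/eqP => ek; move: hx1; rewrite -ek hk.
  have e2 : (k == (ends f).2) = false by apply/eqP => ek; move: h12; rewrite -ek hk.
  by rewrite /avec e1 e2 /= !addr0 !mulr0.
have hu0 : forall f, f \notin bsupp u v -> u f = 0%N.
  by move=> f; rewrite inE negb_or => /andP [/negPn/eqP -> _].
have hv0 : forall f, f \notin bsupp u v -> v f = 0%N.
  by move=> f; rewrite inE negb_or => /andP [_ /negPn/eqP ->].
have sumpw : forall (w : {ffun 'I_m -> nat}) k,
    (forall f, f \notin bsupp u v -> w f = 0%N) ->
    \sum_(f < m) ((if X (ends f).1 then w f else 0%N)%:R * avec ends f k : int) =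
    if X k then \sum_(f < m) (w f)%:R * avec ends f k else 0.
  move=> w k hw; rewrite (eq_bigr _ (fun f _ => pw w k f hw)).
  by case: (X k) => //; rewrite big1.
have htor : in_toric ends u' v'.
  move=> k; rewrite /u' /v'.
  under eq_bigr do rewrite ffunE.
  under [in RHS]eq_bigr do rewrite ffunE.
  rewrite (sumpw u k hu0) (sumpw v k hv0).
  by case: (X k) => //; apply: Htor.
have hnz : nonzero_binom u' v'.
  apply/eqP => h.
  have hu : u' e0 = u e0 by rewrite ffunE hX0.
  have hv : v' e0 = v e0 by rewrite ffunE hX0.
  by move: (HSuv e0 he0); rewrite -hu -hv h eqxx.
have hsub : bsupp u' v' \subset bsupp u v.
  apply/subsetP => f; rewrite !inE !ffunE.
  by case: ifP => _ //; rewrite eqxx.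
have := Hmin u' v' hnz htor hsub.
move=> hm; move: he; rewrite -hm inE !ffunE.
by case: ifP => // _; rewrite eqxx.
Qed.

Lemma main_incl (R : realFieldType) n m (ends : graph_ends n m) u v
  (HC : is_circuit ends u v) (x : 'I_n -> int) :
  in_ZA ends x -> in_Rspan R ends (bsupp u v) x -> in_Zspan ends (bsupp u v) x.
Proof.
move=> hZA hR.
have [[Huv _] _] := HC.
have [e0 he0] : exists e0, e0 \in bsupp u v.
  case: (pickP (fun e => e \in bsupp u v)) => [e0 he0|hnone]; first by exists e0.
  have huv : u = v.
    apply/ffunP => e; have := hnone e; rewrite inE => /negbT.
    by rewrite negb_or !negbK => /andP [/eqP -> /eqP ->].
  by move: Huv; rewrite /nonzero_binom huv eqxx.
set S := bsupp u v.
set r := (ends e0).1.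
pose XA a := in_Zspan ends S (fun t => dlt a t - dlt r t).
pose XB a := in_Zspan ends S (fun t => dlt a t + dlt r t).
pose X a := pb (XA a \/ XB a).
have edge : forall f, f \in S ->
    in_Zspan ends S (fun t => dlt (ends f).1 t + dlt (ends f).2 t).
  by move=> f hf; exact: (Zs_edge ends hf).
have edge' : forall f, f \in S ->
    in_Zspan ends S (fun t => dlt (ends f).2 t + dlt (ends f).1 t).
  by move=> f hf; apply: Zs_ext (edge f hf) => t; rewrite addrC.
have fAB : forall a b, in_Zspan ends S (fun t => dlt a t + dlt b t) -> XA a -> XB b.
  move=> a b hab ha; apply: Zs_ext (ZsB hab ha) => t; ring.
have fBA : forall a b, in_Zspan ends S (fun t => dlt a t + dlt b t) -> XB a -> XA b.
  move=> a b hab ha; apply: Zs_ext (ZsB hab ha) => t; ring.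
have hcl : forall f, f \in S -> X (ends f).1 = X (ends f).2.
  move=> f hf; apply/idP/idP => /pbP [h|h]; apply/pbP.
  - by right; apply: fAB (edge f hf) h.
  - by left; apply: fBA (edge f hf) h.
  - by right; apply: fAB (edge' f hf) h.
  - by left; apply: fBA (edge' f hf) h.
have hr : X r.
  apply/pbP; left; apply: Zs_ext (Zs0 _ _) => t; by rewrite subrr.
have hall1 := circ_conn HC hcl (ex_intro2 _ (fun e => X (ends e).1) e0 he0 hr).
have hall2 : forall f, f \in S -> X (ends f).2.
  by move=> f hf; rewrite -hcl // hall1.
have hsupp : forall k, x k != 0 -> X k.
  move=> k hk; apply/negPn/negP => hXk; move/eqP: hk; apply.
  apply: (Rspan_supp hR) => f hf; rewrite /avec.
  have e1 : (k == (ends f).1) = false.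
    by apply/eqP => ek; move: hXk; rewrite ek hall1.
  have e2 : (k == (ends f).2) = false.
    by apply/eqP => ek; move: hXk; rewrite ek hall2.
  by rewrite e1 e2 /= addr0.
case: (classic (exists a, XA a /\ XB a)) => [[a [ha hb]]|hno].
  have h2r : in_Zspan ends S (fun t => 2 * dlt r t).
    by apply: Zs_ext (ZsB hb ha) => t; ring.
  apply: (@Zs_decomp _ _ _ _ x r (fun _ => 1)).
    move=> k /hsupp /pbP [h|h].
      by apply: Zs_ext h => t; rewrite mul1r.
    by apply: Zs_ext (ZsB h h2r) => t; ring.
  have [D hD] := ZA_even hZA.
  apply: Zs_ext (ZsZ D h2r) => t.
  rewrite (eq_bigr (fun k => x k)); last by move=> k _; rewrite mul1r.
  rewrite hD; ring.
apply: (@Zs_decomp _ _ _ _ x r (fun k => if pb (XA k) then 1 else -1)).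
  move=> k /hsupp /pbP [h|h]; case: pbP => h'.
  - by apply: Zs_ext h => t; rewrite mul1r.
  - by [].
  - by apply: Zs_ext h' => t; rewrite mul1r.
  - by apply: Zs_ext h => t; ring.
have -> : \sum_k (if pb (XA k) then 1 else -1) * x k = 0.
  apply: (Rspan_phi hR) => f hf.
  have h1 := hall1 f hf; have h2 := hall2 f hf.
  case: pbP => a1; case: pbP => a2 //.
  - by case: hno; exists (ends f).2; split=> //; apply: fAB (edge f hf) a1.
  - case/pbP: h1 => // b1; case: a2; exact: fBA (edge f hf) b1.
by apply: Zs_ext (Zs0 _ _) => t; rewrite mul0r.
Qed.

Lemma index_one (R : realFieldType) n m (ends : graph_ends n m) u v
  (HC : is_circuit ends u v) : circuit_index_is R ends u v 1.
Proof.
rewrite /circuit_index_is /lattice_index_is /=.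
exists (fun _ _ => 0); split; [|split].
- move=> i; split.
    by exists (fun _ => 0) => k; rewrite big1 // => e _; rewrite mul0r.
  exists (fun _ => 0); split=> [e _ //|k]; rewrite big1 ?mulr0z // => e _; by rewrite mul0r.
- by move=> i j; rewrite (ord1 i) (ord1 j).
- move=> x [hZA hR]; exists ord0.
  by apply: Zs_ext (main_incl HC hZA hR) => t; rewrite subr0.
Qed.

Lemma index_uniq (R : realFieldType) n m (ends : graph_ends n m) u v
  (HC : is_circuit ends u v) k : circuit_index_is R ends u v k -> k = 1%N.
Proof.
rewrite /circuit_index_is /lattice_index_is /= => -[y [hy [hd hx]]].
case: k y hy hd hx => [|[|k]] y hy hd hx //.
- have [|i] := hx (fun _ => 0); last by case: i.
  split.
    by exists (fun _ => 0) => t; rewrite big1 // => e _; rewrite mul0r.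
  exists (fun _ => 0); split=> [e _ //|t]; rewrite big1 ?mulr0z // => e _; by rewrite mul0r.
- exfalso; apply: (hd ord0 (Ordinal (isT : 1 < k.+2)%N)).
    by move/(congr1 val).
  have [a1 b1] := hy ord0; have [a2 b2] := hy (Ordinal (isT : 1 < k.+2)%N).
  exact: ZsB (main_incl HC a1 b1) (main_incl HC a2 b2).
Qed.

Local Close Scope ring_scope.
Unset Implicit Arguments.

Theorem theorem3p1 (R : realFieldType) (n m : nat) (ends : graph_ends n m)
  (Hsimple : simple_graph ends) (Hconn : connected_graph ends)
  (u v : {ffun 'I_m -> nat}) (HC : is_circuit ends u v) :
  circuit_index_is R ends u v 1 /\
  (forall d, true_deg_is R ends u v d -> d = bdeg u v).
Proof.
split; first exact: index_one HC.
move=> d [k [hk ->]].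
by rewrite (index_uniq HC hk) muln1.
Qed.
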